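(* (1) Any two distinct Bernoulli measures on $\Sigma^\mathbb{Z}$ induce distinct topologies on $\mathtt{CA}$ via the pseudometrics $\delta^\mu$. (2) If $\mu_p$ is a Bernoulli measure and $\nu\ne\mu_p$ is a shift-invariant Borel probability measure on $\Sigma^\mathbb{Z}$, then the topology induced by $\delta^\nu$ on $\mathtt{CA}$ differs from that induced by $\delta^{\mu_p}$.
   Context: $\Sigma$ is a finite alphabet with $|\Sigma|\ge2$. A cellular automaton (CA) is a continuous map $c:\Sigma^\mathbb{Z}\to\Sigma^\mathbb{Z}$ commuting with the shift; $\mathtt{CA}$ is the set of all CA. For $p:\Sigma\to[0,1]$ with $\sum_a p(a)=1$, the Bernoulli measure $\mu_p$ is the Borel probability measure with $\mu_p(\{x\mid x_{[n,n+|w|-1]}=w\})=\prod_{i=0}^{|w|-1}p(w_i)$ for all words $w$ and $n\in\mathbb{Z}$. For a Borel probability measure $\mu$, $\delta^\mu(c,d)=\mu(\{x\mid c(x)_0\ne d(x)_0\})$. *)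

(* Defs.v *)
From Stdlib Require Import Reals ZArith List.
Open Scope R_scope.

Section Defs.
Variable Sigma : Type.

Definition config := Z -> Sigma.
Definition cset := config -> Prop.

(* Product topology on Sigma^Z (Sigma discrete): U is open iff every point of U
   has a central cylinder [x_{-n..n}] contained in U. *)
Definition agree_on (x y : config) (n : nat) : Prop :=
  forall i : Z, (- Z.of_nat n <= i <= Z.of_nat n)%Z -> x i = y i.

Definition is_open (U : cset) : Prop :=
  forall x, U x -> exists n : nat, forall y, agree_on x y n -> U y.

Definition continuous (f : config -> config) : Prop :=
  forall U, is_open U -> is_open (fun x => U (f x)).

Definition shift (x : config) : config := fun i => x (i + 1)%Z.

Definition is_CA (c : config -> config) : Prop :=
  continuous c /\ forall x, c (shift x) = shift (c x).

(* Borel sigma-algebra: smallest sigma-algebra containing the open sets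
   (closed under extensional equality of predicates). *)
Inductive borel : cset -> Prop :=
| borel_open U : is_open U -> borel U
| borel_compl A : borel A -> borel (fun x => ~ A x)
| borel_union (A : nat -> cset) : (forall n, borel (A n)) ->
    borel (fun x => exists n, A n x)
| borel_ext A B : borel A -> (forall x, A x <-> B x) -> borel B.

(* Borel probability measures (values on non-Borel sets are irrelevant). *)
Definition is_prob_measure (mu : cset -> R) : Prop :=
  (forall A, borel A -> 0 <= mu A) /\
  mu (fun _ => True) = 1 /\
  (forall A : nat -> cset,
      (forall n, borel (A n)) ->
      (forall m n x, m <> n -> A m x -> A n x -> False) ->
      infinite_sum (fun n => mu (A n)) (mu (fun x => exists n, A n x))).

Definition meas_eq (mu nu : cset -> R) : Prop :=
  forall A, borel A -> mu A = nu A.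

Definition shift_invariant (mu : cset -> R) : Prop :=
  forall A, borel A -> mu (fun x => A (shift x)) = mu A.

Definition cylinder (n : Z) (w : list Sigma) : cset :=
  fun x => forall (i : nat) (a : Sigma), nth_error w i = Some a ->
             x (n + Z.of_nat i)%Z = a.

Definition word_prob (p : Sigma -> R) (w : list Sigma) : R :=
  fold_right (fun a r => p a * r) 1 w.

(* p is a probability vector on the alphabet, enumerated by the list l *)
Definition prob_vector (l : list Sigma) (p : Sigma -> R) : Prop :=
  (forall a, 0 <= p a /\ p a <= 1) /\ fold_right (fun a r => p a + r) 0 l = 1.

Definition is_bernoulli (l : list Sigma) (p : Sigma -> R) (mu : cset -> R) : Prop :=
  prob_vector l p /\ is_prob_measure mu /\
  forall (n : Z) (w : list Sigma), mu (cylinder n w) = word_prob p w.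

Definition delta (mu : cset -> R) (c d : config -> config) : R :=
  mu (fun x => c x 0%Z <> d x 0%Z).

(* Open sets of the topology on CA induced by delta^mu
   (a set of maps U is identified with U restricted to CA). *)
Definition delta_open (mu : cset -> R) (U : (config -> config) -> Prop) : Prop :=
  forall c, is_CA c -> U c ->
    exists eps, 0 < eps /\
      forall d, is_CA d -> delta mu c d < eps -> U d.

Definition same_topology (mu nu : cset -> R) : Prop :=
  forall U, (forall c, U c -> is_CA c) -> (delta_open mu U <-> delta_open nu U).

End Defs.

Arguments is_CA {Sigma}.

(* Main.v *)
Require Import Defs.
From Stdlib Require Import Reals ZArith List Lia Lra ClassicalEpsilon FunctionalExtensionality PropExtensionality Classical Wf_nat.
Open Scope R_scope.

Definition indR (P : Prop) : R := if excluded_middle_informative P then 1 else 0.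

Lemma indR_true (P : Prop) : P -> indR P = 1.
Proof. intro H. unfold indR. destruct (excluded_middle_informative P); tauto. Qed.
Lemma indR_false (P : Prop) : ~ P -> indR P = 0.
Proof. intro H. unfold indR. destruct (excluded_middle_informative P); tauto. Qed.
Lemma indR_01 (P : Prop) : 0 <= indR P <= 1.
Proof. unfold indR. destruct (excluded_middle_informative P); lra. Qed.

Ltac seteq := apply functional_extensionality; intro; apply propositional_extensionality.

Section Sums.
Variable Sigma : Type.

Definition slL (L : list Sigma) (g : Sigma -> R) : R := fold_right (fun a r => g a + r) 0 L.

Lemma slL_plus L f g : slL L (fun a => f a + g a) = slL L f + slL L g.
Proof. induction L; simpl; [lra|rewrite IHL; lra]. Qed.
Lemma slL_scal L c f : slL L (fun a => c * f a) = c * slL L f.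
Proof. induction L; simpl; [lra|rewrite IHL; lra]. Qed.
Lemma slL_ext L f g : (forall a, f a = g a) -> slL L f = slL L g.
Proof. intro H; induction L; simpl; [lra|rewrite IHL, H; lra]. Qed.
Lemma slL_le L f g : (forall a, f a <= g a) -> slL L f <= slL L g.
Proof. intro H; induction L; simpl; [lra|specialize (H a); lra]. Qed.
Lemma slL_zero L f : (forall a, In a L -> f a = 0) -> slL L f = 0.
Proof. induction L; simpl; intros H; auto. rewrite H, IHL; auto. lra. Qed.
Lemma slL_ind L b h : NoDup L -> In b L -> slL L (fun a => indR (a = b) * h a) = h b.
Proof.
  induction L as [|c L IH]; intros Hn Hi; simpl in *. contradiction.
  inversion Hn; subst. destruct Hi as [<-|Hi].
  - rewrite indR_true by reflexivity.
    rewrite slL_zero. lra. intros a Ha. rewrite indR_false. lra. intro; subst; auto.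
  - rewrite indR_false. rewrite IH; auto. lra. intro; subst; auto.
Qed.

Variable l : list Sigma.
Definition sl := slL l.

Fixpoint SW (n : nat) (f : list Sigma -> R) : R :=
  match n with 0 => f nil | S n => sl (fun a => SW n (fun u => f (a :: u))) end.

Lemma SW_ext n f g : (forall u, length u = n -> f u = g u) -> SW n f = SW n g.
Proof.
  revert f g; induction n; intros f g H; simpl. apply H; reflexivity.
  apply slL_ext; intro a. apply IHn. intros u Hu. apply H. simpl; auto.
Qed.
Lemma SW_le n f g : (forall u, length u = n -> f u <= g u) -> SW n f <= SW n g.
Proof.
  revert f g; induction n; intros f g H; simpl. apply H; reflexivity.
  apply slL_le; intro a. apply IHn. intros u Hu. apply H. simpl; auto.
Qed.
Lemma SW_plus n f g : SW n (fun u => f u + g u) = SW n f + SW n g.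
Proof.
  revert f g; induction n; intros f g; simpl. auto.
  unfold sl; rewrite <- slL_plus. apply slL_ext; intro a. apply IHn.
Qed.
Lemma SW_scal n c f : SW n (fun u => c * f u) = c * SW n f.
Proof.
  revert f; induction n; intros f; simpl. auto.
  unfold sl; rewrite <- slL_scal. apply slL_ext; intro a. apply IHn.
Qed.
Lemma SW_zero n : SW n (fun _ => 0) = 0.
Proof.
  induction n; simpl; auto. unfold sl. apply slL_zero. intros; apply IHn.
Qed.
Lemma SW_slL_swap n L (f : Sigma -> list Sigma -> R) :
  SW n (fun u => slL L (fun b => f b u)) = slL L (fun b => SW n (f b)).
Proof.
  induction L; simpl. apply SW_zero. rewrite SW_plus, IHL. reflexivity.
Qed.
Lemma SW_swap n m (f : list Sigma -> list Sigma -> R) :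
  SW n (fun u => SW m (fun v => f u v)) = SW m (fun v => SW n (fun u => f u v)).
Proof.
  revert f; induction n; intro f; simpl. reflexivity.
  unfold sl. rewrite (slL_ext _ _ (fun a => SW m (fun v => SW n (fun u => f (a :: u) v)))).
  symmetry; apply (SW_slL_swap m l (fun a v => SW n (fun u => f (a :: u) v))).
  intro a. apply (IHn (fun u v => f (a :: u) v)).
Qed.
Lemma SW_app n1 n2 f : SW (n1 + n2) f = SW n1 (fun v => SW n2 (fun u => f (v ++ u))).
Proof.
  revert f; induction n1; intro f; simpl. reflexivity.
  apply slL_ext; intro a. apply (IHn1 (fun u => f (a :: u))).
Qed.

Hypothesis Hnodup : NoDup l.
Hypothesis Hfull : forall a : Sigma, In a l.

Lemma SW_ind n w g : length w = n -> SW n (fun u => indR (u = w) * g u) = g w.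
Proof.
  revert w g; induction n; intros w g Hw; simpl.
  - destruct w; [|discriminate]. rewrite indR_true; auto; lra.
  - destruct w as [|b w]; [discriminate|]. simpl in Hw.
    transitivity (sl (fun a => indR (a = b) * SW n (fun u => indR (u = w) * g (a :: u)))).
    + apply slL_ext; intro a. rewrite <- SW_scal. apply SW_ext; intros u _.
      destruct (excluded_middle_informative (a = b)) as [->|Hab].
      * destruct (excluded_middle_informative (u = w)) as [->|Huw].
        rewrite !indR_true; auto. lra.
        rewrite (indR_false (u = w)), (indR_false (b :: u = b :: w)) by congruence. lra.
      * rewrite (indR_false (a :: u = _)), (indR_false (a = b)) by congruence. lra.
    + unfold sl. rewrite (slL_ind l b (fun a => SW n (fun u => indR (u = w) * g (a :: u)))); auto. apply (IHn w (fun u => g (b :: u))); lia.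
Qed.

Lemma SW_single_le n w h : length w = n -> (forall u, length u = n -> 0 <= h u) -> h w <= SW n h.
Proof.
  intros Hw Hh. rewrite <- (SW_ind n w h Hw). apply SW_le. intros u Hu.
  pose proof (indR_01 (u = w)). specialize (Hh u Hu). nra.
Qed.

End Sums.

Section Meas.
Variable Sigma : Type.
Notation cset := (cset Sigma).
Notation borel := (borel Sigma).

Lemma borel_empty : borel (fun _ => False).
Proof. apply borel_open. intros x []. Qed.
Lemma borel_full : borel (fun _ => True).
Proof. apply borel_open. intros x _. exists 0%nat. auto. Qed.

Definition seq2 (A B : cset) (n : nat) : cset :=
  match n with 0 => A | 1 => B | _ => fun _ => False end.

Lemma seq2_union A B : (fun x => exists n, seq2 A B n x) = (fun x => A x \/ B x).
Proof.
  seteq. split. intros [[|[|n]] H]; simpl in *; tauto.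
  intros [H|H]; [exists 0%nat|exists 1%nat]; auto.
Qed.

Lemma borel_or A B : borel A -> borel B -> borel (fun x => A x \/ B x).
Proof.
  intros HA HB. rewrite <- seq2_union. apply borel_union.
  intros [|[|n]]; simpl; auto. apply borel_empty.
Qed.
Lemma borel_and A B : borel A -> borel B -> borel (fun x => A x /\ B x).
Proof.
  intros HA HB. apply (borel_ext _ (fun x => ~ (~ A x \/ ~ B x))).
  apply borel_compl, borel_or; apply borel_compl; auto.
  intro x. tauto.
Qed.

Variable mu : cset -> R.
Hypothesis Hmu : is_prob_measure Sigma mu.

Lemma sum_const c n : sum_f_R0 (fun _ => c) n = INR (S n) * c.
Proof. induction n; simpl. lra. rewrite IHn. destruct n; simpl; lra. Qed.

Lemma mu_empty : mu (fun _ => False) = 0.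
Proof.
  destruct Hmu as [_ [_ Hs]].
  specialize (Hs (fun _ _ => False) (fun _ => borel_empty) (fun m n x _ H _ => H)).
  assert (E : (fun x : config Sigma => exists n : nat, False) = fun _ => False).
  { seteq. split; [intros [_ []] | intros []]. }
  cbv beta in Hs. rewrite E in Hs. set (c := mu (fun _ => False)) in *.
  destruct (Req_dec c 0) as [|Hc]; auto. exfalso.
  destruct (Hs (Rabs c)) as [N HN]. apply Rabs_pos_lt; auto.
  specialize (HN (S N) ltac:(lia)). unfold Rdist in HN. rewrite sum_const in HN.
  replace (INR (S (S N)) * c - c) with (INR (S N) * c) in HN.
  rewrite Rabs_mult, Rabs_right in HN. 2: apply Rle_ge, pos_INR.
  assert (1 <= INR (S N)). { rewrite S_INR. pose proof (pos_INR N). lra. }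
  pose proof (Rabs_pos_lt c Hc). nra.
  rewrite !S_INR. ring.
Qed.

Lemma mu_nonneg A : borel A -> 0 <= mu A.
Proof. destruct Hmu as [H _]. auto. Qed.

Lemma mu_add A B : borel A -> borel B -> (forall x, A x -> B x -> False) ->
  mu (fun x => A x \/ B x) = mu A + mu B.
Proof.
  intros HA HB Hd. destruct Hmu as [_ [_ Hs]].
  specialize (Hs (seq2 A B)).
  rewrite seq2_union in Hs.
  assert (Hs' : infinite_sum (fun n => mu (seq2 A B n)) (mu (fun x => A x \/ B x))).
  { apply Hs. intros [|[|n]]; simpl; auto. apply borel_empty.
    intros [|[|m]] [|[|n]] x Hmn; simpl; try tauto; try lia; intros; eauto. }
  eapply uniqueness_sum. apply Hs'.
  intros eps Heps. exists 1%nat. intros n Hn.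
  assert (sum_f_R0 (fun n => mu (seq2 A B n)) n = mu A + mu B).
  { induction n. lia. destruct n. simpl. auto. rewrite tech5, IHn by lia. simpl.
    rewrite mu_empty. lra. }
  rewrite H. unfold Rdist. rewrite Rminus_diag, Rabs_R0. lra.
Qed.

Lemma mu_full : mu (fun _ => True) = 1.
Proof. apply Hmu. Qed.

Lemma mu_compl A : borel A -> mu (fun x => ~ A x) = 1 - mu A.
Proof.
  intro HA.
  assert (E : mu (fun x => A x \/ ~ A x) = 1).
  { rewrite <- mu_full. f_equal. seteq. split; auto. intros _. apply classic. }
  rewrite mu_add in E; auto. lra. apply borel_compl; auto.
Qed.

Lemma mu_mono A B : borel A -> borel B -> (forall x, A x -> B x) -> mu A <= mu B.
Proof.
  intros HA HB H.
  replace B with (fun x => A x \/ (B x /\ ~ A x)).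
  rewrite mu_add; auto. pose proof (mu_nonneg (fun x => B x /\ ~ A x)). 
  assert (borel (fun x => B x /\ ~ A x)) by (apply borel_and; auto; apply borel_compl; auto).
  specialize (H0 H1). lra.
  apply borel_and; auto; apply borel_compl; auto. tauto.
  seteq. split. intros [H1|[H1 _]]; auto. intro H1. destruct (classic (A x)); auto.
Qed.

Lemma mu_sub A B C : borel A -> borel B -> borel C -> (forall x, A x -> B x \/ C x) ->
  mu A <= mu B + mu C.
Proof.
  intros HA HB HC H.
  assert (HBC : borel (fun x => C x /\ ~ B x)) by (apply borel_and; auto; apply borel_compl; auto).
  apply Rle_trans with (mu (fun x => B x \/ (C x /\ ~ B x))).
  apply mu_mono; auto. apply borel_or; auto. intros x Hx. destruct (H x Hx); auto.
  destruct (classic (B x)); auto.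
  rewrite mu_add; auto. 2: tauto.
  assert (mu (fun x => C x /\ ~ B x) <= mu C) by (apply mu_mono; tauto). lra.
Qed.

Lemma borel_exL (L : list Sigma) (A : Sigma -> cset) : (forall a, borel (A a)) ->
  borel (fun x => exists a, In a L /\ A a x).
Proof.
  intro H. induction L.
  apply (borel_ext _ (fun _ => False)). apply borel_empty. intro x; split. tauto. intros [a [[] _]].
  apply (borel_ext _ (fun x => A a x \/ exists b, In b L /\ A b x)). apply borel_or; auto.
  intro x. split. intros [H1|[b [H1 H2]]]. exists a; simpl; auto. exists b; simpl; auto.
  intros [b [[<-|H1] H2]]; eauto.
Qed.

Lemma mu_exL (L : list Sigma) (A : Sigma -> cset) : NoDup L -> (forall a, borel (A a)) ->
  (forall a b x, a <> b -> A a x -> A b x -> False) ->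
  mu (fun x => exists a, In a L /\ A a x) = slL Sigma L (fun a => mu (A a)).
Proof.
  intros Hn HA Hd. induction L as [|c L IH]; simpl.
  - rewrite <- mu_empty. f_equal. seteq. split. intros [a [[] _]]. tauto.
  - inversion Hn as [|c0 L0 Hc HL]; subst. rewrite <- IH by auto. rewrite <- mu_add; auto.
    f_equal. seteq. split. intros [b [[<-|H1] Hb]]; eauto.
    intros [Hb1|[b [Hb1 Hb2]]]. exists c; simpl; auto. exists b; simpl; auto.
    apply borel_exL; auto.
    intros x H1 [b [H3 H4]]. apply (Hd c b x); auto. intro; subst; auto.
Qed.

End Meas.

Section Cyl.
Variable Sigma : Type.
Notation cset := (cset Sigma).
Notation borel := (borel Sigma).
Notation cyl := (cylinder Sigma).

Lemma cyl_nil a x : cyl a nil x.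
Proof. intros [|i] b H; discriminate. Qed.

Lemma cyl_cons a b u x : cyl a (b :: u) x <-> x a = b /\ cyl (a + 1) u x.
Proof.
  split.
  - intro H. split. specialize (H 0%nat b eq_refl). rewrite Z.add_0_r in H. auto.
    intros i c Hi. specialize (H (S i) c Hi). rewrite <- H. f_equal. lia.
  - intros [H1 H2] [|i] c Hi; simpl in Hi.
    inversion Hi; subst. rewrite Z.add_0_r; auto.
    rewrite <- (H2 i c Hi). f_equal. lia.
Qed.

Lemma cyl_snoc a v b x : cyl a (v ++ b :: nil) x <-> cyl a v x /\ x (a + Z.of_nat (length v))%Z = b.
Proof.
  revert a; induction v as [|c v IH]; intro a; simpl.
  - rewrite cyl_cons. rewrite Z.add_0_r. split. intros [H _]; split; auto. apply cyl_nil.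
    intros [_ H]; split; auto. apply cyl_nil.
  - rewrite !cyl_cons, IH. replace (a + 1 + Z.of_nat (length v))%Z with (a + Z.pos (Pos.of_succ_nat (length v)))%Z by lia.
    tauto.
Qed.

Lemma cyl_open a u : is_open Sigma (cyl a u).
Proof.
  intros x Hx. exists (Z.to_nat (Z.abs a) + length u)%nat. intros y Hy i c Hi.
  rewrite <- (Hx i c Hi). symmetry. apply Hy.
  assert (i < length u)%nat by (apply nth_error_Some; congruence). lia.
Qed.

Lemma cyl_borel a u : borel (cyl a u).
Proof. apply borel_open, cyl_open. Qed.

Variable l : list Sigma.
Hypothesis Hnodup : NoDup l.
Hypothesis Hfull : forall a : Sigma, In a l.

Variable mu : cset -> R.
Hypothesis Hmu : is_prob_measure Sigma mu.

Lemma part_snoc S a v : borel S ->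
  mu (fun x => S x /\ cyl a v x) = sl Sigma l (fun b => mu (fun x => S x /\ cyl a (v ++ b :: nil) x)).
Proof.
  intro HS. unfold sl. rewrite <- mu_exL; auto.
  - f_equal. seteq. split.
    + intros [H1 H2]. exists (x (a + Z.of_nat (length v))%Z). split; auto. split; auto.
      apply cyl_snoc; auto.
    + intros [b [_ [H1 H2]]]. apply cyl_snoc in H2. tauto.
  - intro b. apply borel_and; auto. apply cyl_borel.
  - intros b c x Hbc [_ H1] [_ H2]. apply cyl_snoc in H1. apply cyl_snoc in H2.
    apply Hbc. destruct H1 as [_ <-]. destruct H2 as [_ <-]. auto.
Qed.

Lemma decomp S a N v : borel S ->
  mu (fun x => S x /\ cyl a v x) = SW Sigma l N (fun u => mu (fun x => S x /\ cyl a (v ++ u) x)).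
Proof.
  intro HS. revert v; induction N; intro v; simpl.
  - rewrite app_nil_r. auto.
  - rewrite part_snoc by auto. apply slL_ext. intro b. rewrite IHN.
    apply SW_ext. intros u _. rewrite <- app_assoc. reflexivity.
Qed.

Lemma decomp_cyl a N v :
  mu (cyl a v) = SW Sigma l N (fun u => mu (cyl a (v ++ u))).
Proof.
  assert (E : forall w, (fun x => True /\ cyl a w x) = cyl a w).
  { intro w. seteq. tauto. }
  rewrite <- E. rewrite (decomp (fun _ => True) a N v (borel_full Sigma)).
  apply SW_ext. intros; rewrite E; auto.
Qed.

Lemma SW_meas_one a N : SW Sigma l N (fun u => mu (cyl a u)) = 1.
Proof.
  rewrite <- (mu_full Sigma mu Hmu). replace (fun _ : config Sigma => True) with (cyl a nil).
  rewrite (decomp_cyl a N nil). reflexivity.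
  seteq. split; auto. intros _. apply cyl_nil.
Qed.

Lemma meas_sum S a N (Pr : list Sigma -> Prop) : borel S ->
  (forall u, length u = N -> forall x, cyl a u x -> (S x <-> Pr u)) ->
  mu S = SW Sigma l N (fun u => indR (Pr u) * mu (cyl a u)).
Proof.
  intros HS HP.
  assert (E : mu S = mu (fun x => S x /\ cyl a nil x)).
  { f_equal. seteq. split. intro; split; auto; apply cyl_nil. tauto. }
  rewrite E, (decomp S a N nil HS). apply SW_ext. intros u Hu. simpl.
  destruct (excluded_middle_informative (Pr u)) as [H|H].
  - rewrite indR_true by auto. rewrite Rmult_1_l. f_equal. seteq. split. tauto.
    intro Hx. split; auto. apply (HP u Hu x Hx); auto.
  - rewrite indR_false by auto. rewrite Rmult_0_l. rewrite <- (mu_empty Sigma mu Hmu).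
    f_equal. seteq. split. intros [H1 H2]. apply H, (HP u Hu x H2); auto. tauto.
Qed.

Lemma part_front c u : mu (cyl (c + 1) u) = sl Sigma l (fun b => mu (cyl c (b :: u))).
Proof.
  unfold sl. rewrite <- mu_exL; auto.
  - f_equal. seteq. split.
    + intro H. exists (x c). split; auto. apply cyl_cons. auto.
    + intros [b [_ H]]. apply cyl_cons in H. tauto.
  - intro; apply cyl_borel.
  - intros b d x Hbd H1 H2. apply cyl_cons in H1. apply cyl_cons in H2. apply Hbd.
    destruct H1 as [<- _]. destruct H2 as [<- _]. auto.
Qed.

Lemma marg_front a m u :
  SW Sigma l m (fun v => mu (cyl a (v ++ u))) = mu (cyl (a + Z.of_nat m) u).
Proof.
  revert u; induction m; intro u.
  - simpl. rewrite Z.add_0_r. reflexivity.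
  - replace (S m) with (m + 1)%nat by lia. rewrite SW_app. simpl.
    transitivity (SW Sigma l m (fun v => sl Sigma l (fun b => mu (cyl a (v ++ b :: u))))).
    { apply SW_ext. intros v _. apply slL_ext. intro b. rewrite <- app_assoc. reflexivity. }
    unfold sl. rewrite (SW_slL_swap Sigma l m l (fun b v => mu (cyl a (v ++ b :: u)))).
    replace (a + Z.of_nat (m + 1))%Z with (a + Z.of_nat m + 1)%Z by lia.
    rewrite part_front. apply slL_ext. intro b. apply IHm.
Qed.

End Cyl.

Section Uniq.
Variable Sigma : Type.
Notation cset := (cset Sigma).
Notation borel := (borel Sigma).
Notation cyl := (cylinder Sigma).
Notation agree := (agree_on Sigma).

Lemma agree_refl x n : agree x x n.
Proof. intros i _; auto. Qed.
Lemma agree_sym x y n : agree x y n -> agree y x n.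
Proof. intros H i Hi; symmetry; auto. Qed.
Lemma agree_trans x y z n : agree x y n -> agree y z n -> agree x z n.
Proof. intros H1 H2 i Hi. rewrite H1; auto. Qed.
Lemma agree_mono x y n n' : (n <= n')%nat -> agree x y n' -> agree x y n.
Proof. intros Hn H i Hi. apply H. lia. Qed.

Definition locdet (S : cset) := exists n, forall x y, agree x y n -> (S x <-> S y).

Lemma locdet_open S : locdet S -> is_open Sigma S.
Proof. intros [n Hn] x Hx. exists n. intros y Hy. apply (Hn x y Hy); auto. Qed.

Inductive lam (P : cset -> Prop) : cset -> Prop :=
| lam_P A : P A -> lam P A
| lam_c A : lam P A -> lam P (fun x => ~ A x)
| lam_u (A : nat -> cset) : (forall n, lam P (A n)) ->
    (forall m n x, m <> n -> A m x -> A n x -> False) -> lam P (fun x => exists n, A n x).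

Section PL.
Variable P : cset -> Prop.
Hypothesis HPfull : P (fun _ => True).
Hypothesis HPint : forall A B, P A -> P B -> P (fun x => A x /\ B x).

Lemma lam_union2 A B : lam P A -> lam P B -> (forall x, A x -> B x -> False) ->
  lam P (fun x => A x \/ B x).
Proof.
  intros HA HB Hd. rewrite <- seq2_union. apply lam_u.
  - intros [|[|n]]; simpl; auto.
    replace (fun _ : config Sigma => False) with (fun x : config Sigma => ~ True).
    apply lam_c, lam_P, HPfull. seteq. tauto.
  - intros [|[|m]] [|[|n]] x Hmn; simpl; try tauto; try lia; intros; eauto.
Qed.

Lemma stepa A B : P A -> lam P B -> lam P (fun x => A x /\ B x).
Proof.
  intros HA HB. induction HB as [B HB|B HB IH|B HB IH Hd].
  - apply lam_P, HPint; auto.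
  - replace (fun x => A x /\ ~ B x) with (fun x => ~ (~ A x \/ (A x /\ B x))).
    apply lam_c, lam_union2; auto. apply lam_c, lam_P; auto. tauto.
    seteq. tauto.
  - replace (fun x => A x /\ exists n, B n x) with (fun x => exists n, A x /\ B n x).
    apply lam_u; auto. intros m n x Hmn [_ H1] [_ H2]; eauto.
    seteq. split. intros [n [H1 H2]]; eauto. intros [H1 [n H2]]; eauto.
Qed.

Lemma lam_and A B : lam P A -> lam P B -> lam P (fun x => A x /\ B x).
Proof.
  intros HA HB. induction HA as [A HA|A HA IH|A HA IH Hd].
  - apply stepa; auto.
  - replace (fun x => ~ A x /\ B x) with (fun x => ~ (~ B x \/ (A x /\ B x))).
    apply lam_c, lam_union2; auto. apply lam_c; auto. tauto.
    seteq. tauto.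
  - replace (fun x => (exists n, A n x) /\ B x) with (fun x => exists n, A n x /\ B x).
    apply lam_u; auto. intros m n x Hmn [H1 _] [H2 _]; eauto.
    seteq. split. intros [n [H1 H2]]; eauto. intros [[n H1] H2]; eauto.
Qed.

Lemma lam_or A B : lam P A -> lam P B -> lam P (fun x => A x \/ B x).
Proof.
  intros HA HB. replace (fun x => A x \/ B x) with (fun x => ~ (~ A x /\ ~ B x)).
  apply lam_c, lam_and; apply lam_c; auto. seteq. tauto.
Qed.

Fixpoint Fu (A : nat -> cset) (n : nat) : cset :=
  match n with 0 => fun _ => False | S n => fun x => Fu A n x \/ A n x end.

Lemma Fu_iff (A : nat -> cset) n x : Fu A n x <-> exists i, (i < n)%nat /\ A i x.
Proof.
  induction n; simpl. split. tauto. intros [i [Hi _]]; lia.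
  rewrite IHn. split. intros [[i [Hi H]]|H]. exists i; split; auto; lia. exists n; auto.
  intros [i [Hi H]]. destruct (Nat.eq_dec i n). subst; auto. left; exists i; split; auto; lia.
Qed.

Lemma lam_empty : lam P (fun _ => False).
Proof.
  replace (fun _ : config Sigma => False) with (fun x : config Sigma => ~ True).
  apply lam_c, lam_P, HPfull. seteq. tauto.
Qed.

Lemma lam_cunion (A : nat -> cset) : (forall n, lam P (A n)) -> lam P (fun x => exists n, A n x).
Proof.
  intro HA.
  assert (HF : forall n, lam P (Fu A n)).
  { induction n; simpl. apply lam_empty. apply lam_or; auto. }
  replace (fun x => exists n, A n x) with (fun x => exists n, A n x /\ ~ Fu A n x).
  - apply lam_u. intro n. apply lam_and; auto. apply lam_c; auto.
    intros m n x Hmn [H1 H2] [H3 H4].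
    destruct (Nat.lt_gt_cases m n) as [[Hlt|Hlt] _]; auto.
    apply H4, Fu_iff. eauto. apply H2, Fu_iff. eauto.
  - seteq. split. intros [n [H _]]; eauto.
    intros [n Hn]. induction n as [n IH] using lt_wf_ind.
    destruct (classic (Fu A n x)) as [H|H]. apply Fu_iff in H. destruct H as [i [Hi H]].
    apply (IH i); auto. eauto.
Qed.

End PL.

Lemma locdet_full : locdet (fun _ => True).
Proof. exists 0%nat. tauto. Qed.
Lemma locdet_and A B : locdet A -> locdet B -> locdet (fun x => A x /\ B x).
Proof.
  intros [n HA] [m HB]. exists (Nat.max n m). intros x y H.
  rewrite (HA x y), (HB x y). tauto. apply (agree_mono _ _ _ _ (Nat.le_max_r n m) H).
  apply (agree_mono _ _ _ _ (Nat.le_max_l n m) H).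
Qed.

Lemma borel_lam A : borel A -> lam locdet A.
Proof.
  intro H. induction H as [U HU|A HA IH|A HA IH|A B HA IH Hext].
  - replace U with (fun x => exists n, (fun n x => forall y, agree x y n -> U y) n x).
    apply lam_cunion. apply locdet_full. apply locdet_and.
    intro n. apply lam_P. exists n. intros x x' Hxx'. split.
    intros H y Hy. apply H. apply (agree_trans _ x'); auto.
    intros H y Hy. apply H. apply (agree_trans _ x); auto. apply agree_sym; auto.
    seteq. split. intros [n Hn]. apply Hn, agree_refl. intro Hx. apply HU; auto.
  - apply lam_c; auto.
  - apply lam_cunion; auto. apply locdet_full. apply locdet_and.
  - replace B with A; auto. seteq. auto.
Qed.

Variable m1 m2 : cset -> R.
Hypothesis H1 : is_prob_measure Sigma m1.
Hypothesis H2 : is_prob_measure Sigma m2.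

Lemma uniq_locdet : (forall S, locdet S -> m1 S = m2 S) -> forall A, borel A -> m1 A = m2 A.
Proof.
  intros Hl A HA. apply borel_lam in HA.
  assert (borel A /\ m1 A = m2 A) as [_ ?]; auto.
  induction HA as [A HA|A HA IH|A HA IH Hd].
  - split; auto. apply borel_open, locdet_open; auto.
  - destruct IH as [IH1 IH2]. split. apply borel_compl; auto.
    rewrite !mu_compl; auto. rewrite IH2; auto.
  - assert (Hb : forall n, borel (A n)) by (intro n; apply IH).
    split. apply borel_union; auto.
    destruct H1 as [_ [_ S1]]. destruct H2 as [_ [_ S2]].
    specialize (S1 A Hb Hd). specialize (S2 A Hb Hd).
    eapply uniqueness_sum. apply S1.
    replace (fun n => m1 (A n)) with (fun n => m2 (A n)). auto.
    apply functional_extensionality. intro n. symmetry; apply IH.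
Qed.

Lemma agree_cyl n u x y : length u = (2 * n + 1)%nat ->
  cyl (- Z.of_nat n) u x -> cyl (- Z.of_nat n) u y -> agree x y n.
Proof.
  intros Hu Hx Hy i Hi.
  set (j := Z.to_nat (i + Z.of_nat n)).
  assert (Hj : (j < length u)%nat) by (unfold j; lia).
  destruct (nth_error u j) as [c|] eqn:E.
  2: { apply nth_error_None in E. lia. }
  specialize (Hx j c E). specialize (Hy j c E).
  replace (- Z.of_nat n + Z.of_nat j)%Z with i in * by (unfold j; lia). congruence.
Qed.

Variable l : list Sigma.
Hypothesis Hnodup : NoDup l.
Hypothesis Hfull : forall a : Sigma, In a l.

Lemma uniq_cyl : (forall a u, m1 (cyl a u) = m2 (cyl a u)) -> forall A, borel A -> m1 A = m2 A.
Proof.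
  intro Hc. apply uniq_locdet. intros S HS.
  pose proof HS as [n Hn].
  assert (HSb : borel S) by (apply borel_open, locdet_open; auto).
  set (Pr := fun u => exists x, cyl (- Z.of_nat n) u x /\ S x).
  assert (HP : forall u, length u = (2 * n + 1)%nat -> forall x, cyl (- Z.of_nat n) u x -> (S x <-> Pr u)).
  { intros u Hu x Hx. split. intro; exists x; auto.
    intros [y [Hy HSy]]. apply (Hn y x); auto. apply (agree_cyl n u); auto. }
  rewrite (meas_sum Sigma l Hnodup Hfull m1 H1 S _ _ Pr HSb HP).
  rewrite (meas_sum Sigma l Hnodup Hfull m2 H2 S _ _ Pr HSb HP).
  apply SW_ext. intros u _. rewrite Hc. auto.
Qed.

End Uniq.

Section Topo.
Variable Sigma : Type.
Notation cset := (cset Sigma).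
Notation borel := (borel Sigma).
Notation agree := (agree_on Sigma).
Variables a0 a1 : Sigma.
Hypothesis Ha : a0 <> a1.

Definition sig (a : Sigma) : Sigma := if excluded_middle_informative (a = a0) then a1 else a0.
Lemma sig_ne a : sig a <> a.
Proof. unfold sig. destruct (excluded_middle_informative (a = a0)); congruence. Qed.

Definition dS (S : cset) (x : config Sigma) : config Sigma :=
  fun i => if excluded_middle_informative (S (fun j => x (j + i)%Z)) then sig (x i) else x i.

Lemma dS_CA S : locdet Sigma S -> is_CA (dS S).
Proof.
  intros [n Hn]. split.
  - intros U HU x Hx. destruct (HU _ Hx) as [N HN]. exists (N + n)%nat.
    intros y Hy. apply HN. intros i Hi. unfold dS.
    assert (E1 : x i = y i) by (apply Hy; lia).
    assert (E2 : S (fun j => x (j + i)%Z) <-> S (fun j => y (j + i)%Z)).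
    { apply Hn. intros j Hj. apply Hy. lia. }
    destruct (excluded_middle_informative (S (fun j => x (j + i)%Z)));
    destruct (excluded_middle_informative (S (fun j => y (j + i)%Z))); try tauto; congruence.
  - intro x. apply functional_extensionality. intro i. unfold dS, Defs.shift; cbv beta.
    replace (fun j => x (j + i + 1)%Z) with (fun j => x (j + (i + 1))%Z).
    reflexivity. apply functional_extensionality. intro j. f_equal. lia.
Qed.

Lemma id_CA : is_CA (fun x : config Sigma => x).
Proof. split; auto. intros U HU; auto. Qed.

Lemma dS_set S : (fun x => x 0%Z <> dS S x 0%Z) = S.
Proof.
  seteq. unfold dS. replace (fun j => x (j + 0)%Z) with x.
  destruct (excluded_middle_informative (S x)). split; auto. intros _. apply not_eq_sym, sig_ne.
  split; tauto.
  apply functional_extensionality; intro j; rewrite Z.add_0_r; auto.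
Qed.

Lemma diff_open f g : is_CA f -> is_CA g -> is_open Sigma (fun x => f x 0%Z <> g x 0%Z).
Proof.
  intros [Cf _] [Cg _] x Hx.
  assert (Vo : forall b, is_open Sigma (fun z => z 0%Z = b)).
  { intros b z Hz. exists 0%nat. intros y Hy. rewrite <- Hy; auto. lia. }
  destruct (Cf _ (Vo (f x 0%Z)) x eq_refl) as [n1 H1].
  destruct (Cg _ (Vo (g x 0%Z)) x eq_refl) as [n2 H2].
  exists (Nat.max n1 n2). intros y Hy.
  rewrite (H1 y), (H2 y); auto. apply (agree_mono _ _ _ _ _ (Nat.le_max_r n1 n2) Hy).
  apply (agree_mono _ _ _ _ _ (Nat.le_max_l n1 n2) Hy).
Qed.

Variables mu nu : cset -> R.
Hypothesis Hnu : is_prob_measure Sigma nu.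

Lemma topo :
  (forall U, (forall c, U c -> is_CA c) -> delta_open Sigma nu U -> delta_open Sigma mu U) ->
  forall c0, 0 < c0 -> exists eps, 0 < eps /\
    forall S, locdet Sigma S -> mu S < eps -> nu S < c0.
Proof.
  intros HT c0 Hc0.
  set (U := fun d => is_CA d /\ delta Sigma nu (fun x => x) d < c0).
  assert (HU : delta_open Sigma nu U).
  { intros c Hc [_ Hcd]. exists (c0 - delta Sigma nu (fun x => x) c). split. lra.
    intros d Hd Hcd'. split; auto. unfold delta in *.
    pose proof (mu_sub Sigma nu Hnu (fun x => x 0%Z <> d x 0%Z) (fun x => x 0%Z <> c x 0%Z)
       (fun x => c x 0%Z <> d x 0%Z)) as Hs.
    assert (nu (fun x => x 0%Z <> d x 0%Z) <= nu (fun x => x 0%Z <> c x 0%Z) + nu (fun x => c x 0%Z <> d x 0%Z)).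
    { apply Hs; try (apply borel_open, diff_open; auto using id_CA).
      intros x Hx. destruct (classic (x 0%Z = c x 0%Z)); [right; congruence| left; auto]. }
    lra. }
  apply HT in HU. 2: intros c [H _]; auto.
  destruct (HU (fun x => x) id_CA) as [eps [Heps He]].
  { split. apply id_CA. unfold delta. replace (fun x : config Sigma => x 0%Z <> x 0%Z) with (fun _ : config Sigma => False).
    rewrite mu_empty; auto. seteq. tauto. }
  exists eps. split; auto. intros S HS HmS.
  destruct (He (dS S)) as [_ H]. apply dS_CA; auto.
  unfold delta. rewrite dS_set. auto.
  unfold delta in H. rewrite dS_set in H. auto.
Qed.

End Topo.

Section LLN.
Variable Sigma : Type.
Notation cset := (cset Sigma).
Notation borel := (borel Sigma).
Notation cyl := (cylinder Sigma).
Notation agree := (agree_on Sigma).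
Variable l : list Sigma.
Hypothesis Hnodup : NoDup l.
Hypothesis Hfull : forall a : Sigma, In a l.
Notation SW := (SW Sigma l).

Variable p : Sigma -> R.
Hypothesis Hp : prob_vector Sigma l p.
Notation wp := (word_prob Sigma p).

Lemma wp_app v u : wp (v ++ u) = wp v * wp u.
Proof. induction v; simpl. lra. rewrite IHv. lra. Qed.
Lemma wp_bounds u : 0 <= wp u <= 1.
Proof.
  induction u; simpl. lra. destruct Hp as [H _]. specialize (H a). nra.
Qed.
Lemma SW_wp N : SW N wp = 1.
Proof.
  induction N; simpl. auto.
  transitivity (sl Sigma l (fun a => p a * SW N wp)).
  apply slL_ext. intro a. rewrite <- SW_scal. auto.
  rewrite IHN. destruct Hp as [_ H].
  assert (E : sl Sigma l (fun a => p a * 1) = sl Sigma l p) by (apply slL_ext; intro; ring).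
  rewrite E. exact H.
Qed.

Lemma firstn_app_len (v u : list Sigma) : firstn (length v) (v ++ u) = v.
Proof. induction v; simpl; auto. rewrite IHv; auto. Qed.
Lemma skipn_app_len (v u : list Sigma) : skipn (length v) (v ++ u) = u.
Proof. induction v; simpl; auto. Qed.

Variable m : nat.
Variable w : list Sigma.
Hypothesis Hw : length w = m.

Fixpoint cnt (k : nat) (u : list Sigma) : R :=
  match k with 0 => 0 | S k => indR (firstn m u = w) + cnt k (skipn m u) end.

Lemma cnt_bounds k u : 0 <= cnt k u <= INR k.
Proof.
  revert u; induction k; intro u. simpl; lra.
  change (cnt (S k) u) with (indR (firstn m u = w) + cnt k (skipn m u)). pose proof (indR_01 (firstn m u = w)).
  specialize (IHk (skipn m u)). rewrite S_INR. lra.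
Qed.

Lemma cnt_app k v u : length v = m -> cnt (S k) (v ++ u) = indR (v = w) + cnt k u.
Proof. intro Hv. simpl. rewrite <- Hv, firstn_app_len, skipn_app_len. auto. Qed.

Section Expect.
Variable Q : cset -> R.
Hypothesis HQ : is_prob_measure Sigma Q.
Variable alpha : R.
Hypothesis Hal : forall a, Q (cyl a w) = alpha.

Lemma expect k a : SW (k * m) (fun u => Q (cyl a u) * cnt k u) = INR k * alpha.
Proof.
  revert a; induction k; intro a.
  - simpl. lra.
  - change (S k * m)%nat with (m + k * m)%nat. rewrite SW_app.
    transitivity (SW m (fun v => indR (v = w) * SW (k * m) (fun u => Q (cyl a (v ++ u)))
                   + SW (k * m) (fun u => Q (cyl a (v ++ u)) * cnt k u))).
    { apply SW_ext. intros v Hv. rewrite <- SW_scal, <- SW_plus. apply SW_ext. intros u Hu.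
      rewrite cnt_app by auto. ring. }
    rewrite SW_plus.
    rewrite (SW_ext Sigma l m _ (fun v => indR (v = w) * Q (cyl a v))).
    2: { intros v _. rewrite <- (decomp_cyl Sigma l Hnodup Hfull Q HQ a (k * m) v). auto. }
    rewrite SW_ind by auto. rewrite Hal.
    rewrite (SW_swap Sigma l m (k * m) (fun v u => Q (cyl a (v ++ u)) * cnt k u)).
    rewrite (SW_ext Sigma l (k * m) _ (fun u => Q (cyl (a + Z.of_nat m) u) * cnt k u)).
    2: { intros u _. rewrite <- (marg_front Sigma l Hnodup Hfull Q HQ a m u).
         rewrite Rmult_comm, <- SW_scal. apply SW_ext. intros; ring. }
    rewrite IHk. rewrite S_INR. ring.
Qed.


End Expect.

Section Var.
Hypothesis HE : forall k, SW (k * m) (fun u => wp u * cnt k u) = INR k * wp w.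

Lemma var k : SW (k * m) (fun u => wp u * (cnt k u - INR k * wp w) ^ 2) <= INR k.
Proof.
  set (beta := wp w) in *.
  assert (Hbeta : 0 <= beta <= 1) by apply wp_bounds.
  induction k.
  - simpl. lra.
  - change (S k * m)%nat with (m + k * m)%nat. rewrite SW_app.
    set (V := SW (k * m) (fun u => wp u * (cnt k u - INR k * beta) ^ 2)) in *.
    assert (H0 : SW (k * m) (fun u => wp u * (cnt k u - INR k * beta)) = 0).
    { rewrite (SW_ext Sigma l _ _ (fun u => wp u * cnt k u + (- (INR k * beta)) * wp u)).
      rewrite SW_plus, SW_scal, HE, SW_wp. ring. intros; ring. }
    transitivity (SW m (fun v => wp v * (indR (v = w) - beta) ^ 2 + wp v * V)).
    + right. apply SW_ext. intros v Hv.
      rewrite (SW_ext Sigma l _ _ (fun u => (wp v * (indR (v = w) - beta) ^ 2) * wp u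
          + ((2 * wp v * (indR (v = w) - beta)) * (wp u * (cnt k u - INR k * beta))
          + wp v * (wp u * (cnt k u - INR k * beta) ^ 2)))).
      rewrite !SW_plus, !SW_scal, SW_wp, H0. fold V. ring.
      intros u Hu. rewrite cnt_app by auto. rewrite wp_app, S_INR. ring.
    + rewrite SW_plus, (SW_ext Sigma l m (fun v => wp v * V) (fun v => V * wp v)), SW_scal, SW_wp.
      2: intros; ring.
      assert (SW m (fun v => wp v * (indR (v = w) - beta) ^ 2) <= SW m wp).
      { apply SW_le. intros v _. pose proof (indR_01 (v = w)). pose proof (wp_bounds v).
        assert ((indR (v = w) - beta) ^ 2 <= 1) by nra. nra. }
      rewrite SW_wp in H. rewrite S_INR. lra.
Qed.
End Var.

Fixpoint pref (x : config Sigma) (a : Z) (N : nat) : list Sigma :=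
  match N with 0 => nil | S N => x a :: pref x (a + 1)%Z N end.

Lemma pref_cyl u a x : cyl a u x -> pref x a (length u) = u.
Proof.
  revert a; induction u; intros b H; simpl; auto.
  apply cyl_cons in H. destruct H as [H1 H2]. rewrite H1, IHu; auto.
Qed.

Lemma pref_eq N a x y : (forall i, (a <= i < a + Z.of_nat N)%Z -> x i = y i) -> pref x a N = pref y a N.
Proof.
  revert a; induction N; intros a H; simpl; auto. rewrite H by lia. f_equal. apply IHN.
  intros i Hi; apply H; lia.
Qed.

End LLN.

Section Main.
Variable Sigma : Type.
Notation cset := (cset Sigma).
Notation borel := (borel Sigma).
Notation cyl := (cylinder Sigma).
Variable l : list Sigma.
Hypothesis Hnodup : NoDup l.
Hypothesis Hfull : forall a : Sigma, In a l.
Notation SW := (SW Sigma l).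
Variables a0 a1 : Sigma.
Hypothesis Ha : a0 <> a1.
Variable p : Sigma -> R.
Variables mu nu : cset -> R.
Hypothesis Hmu : is_bernoulli Sigma l p mu.
Hypothesis Hnu : is_prob_measure Sigma nu.
Hypothesis Hst : forall a u, nu (cyl a u) = nu (cyl 0 u).
Hypothesis HT : forall U, (forall c, U c -> is_CA c) -> delta_open Sigma nu U -> delta_open Sigma mu U.
Notation wp := (word_prob Sigma p).

Lemma Hmucyl a u : mu (cyl a u) = wp u.
Proof. apply Hmu. Qed.
Lemma Hpv : prob_vector Sigma l p.
Proof. apply Hmu. Qed.
Lemma Hmup : is_prob_measure Sigma mu.
Proof. apply Hmu. Qed.

Lemma key w : nu (cyl 0 w) > wp w -> False.
Proof.
  intro Hgt.
  set (m := length w).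
  set (alpha := nu (cyl 0 w)) in *. set (beta := wp w) in *.
  assert (Hb : 0 <= beta <= 1) by (apply (wp_bounds Sigma l p Hpv)).
  assert (HEmu : forall k, SW (k * m) (fun u => wp u * cnt Sigma m w k u) = INR k * beta).
  { intro k. rewrite <- (expect Sigma l Hnodup Hfull m w eq_refl mu Hmup beta (fun a => Hmucyl a w) k 0%Z).
    apply SW_ext. intros. rewrite Hmucyl. auto. }
  assert (HEnu : forall k, SW (k * m) (fun u => nu (cyl 0 u) * cnt Sigma m w k u) = INR k * alpha).
  { intro k. apply (expect Sigma l Hnodup Hfull m w eq_refl nu Hnu alpha (fun a => Hst a w) k 0%Z). }
  set (c0 := (alpha - beta) / 2).
  assert (Hc0 : 0 < c0) by (unfold c0; lra).
  destruct (topo Sigma a0 a1 Ha mu nu Hnu HT c0 Hc0) as [eps [Heps Htop]].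
  destruct (archimed_cor1 (eps * c0 ^ 2)) as [N [HN HN0]].
  { apply Rmult_lt_0_compat; auto. apply pow_lt; auto. }
  set (t := (alpha + beta) / 2).
  set (S := fun x => cnt Sigma m w N (pref Sigma x 0 (N * m)) >= t * INR N).
  assert (HSloc : locdet Sigma S).
  { exists (N * m)%nat. intros x y H. unfold S. rewrite (pref_eq Sigma m w eq_refl _ _ x y). tauto.
    intros i Hi. apply H. lia. }
  assert (HSb : borel S) by (apply borel_open, locdet_open; auto).
  assert (HP : forall u, length u = (N * m)%nat -> forall x, cyl 0 u x ->
                 (S x <-> cnt Sigma m w N u >= t * INR N)).
  { intros u Hu x Hx. unfold S. rewrite <- Hu, (pref_cyl Sigma u 0 x Hx). tauto. }
  pose proof (meas_sum Sigma l Hnodup Hfull mu Hmup S 0%Z (N * m) _ HSb HP) as EmuS.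
  pose proof (meas_sum Sigma l Hnodup Hfull nu Hnu S 0%Z (N * m) _ HSb HP) as EnuS.
  assert (HNpos : 0 < INR N) by (apply lt_0_INR; lia).
  assert (Hmub : mu S * (INR N * c0) ^ 2 <= INR N).
  { rewrite EmuS, Rmult_comm, <- SW_scal.
    eapply Rle_trans. 2: apply (var Sigma l p Hpv m w HEmu N).
    apply SW_le. intros u _. rewrite Hmucyl. pose proof (wp_bounds Sigma l p Hpv u).
    pose proof (cnt_bounds Sigma m w N u).
    destruct (excluded_middle_informative (cnt Sigma m w N u >= t * INR N)) as [Hc|Hc].
    - rewrite indR_true by auto. fold beta.
      assert (INR N * c0 <= cnt Sigma m w N u - INR N * beta) by (unfold t, c0 in *; nra).
      assert ((INR N * c0) ^ 2 <= (cnt Sigma m w N u - INR N * beta) ^ 2).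
      { apply pow_incr. split; auto. nra. }
      rewrite Rmult_1_l, Rmult_comm. apply Rmult_le_compat_l; [tauto|auto].
    - rewrite indR_false by auto. fold beta. rewrite Rmult_0_l, Rmult_0_r. apply Rmult_le_pos; [tauto|apply pow2_ge_0]. }
  assert (Hnub : c0 <= nu S).
  { assert (Hle : SW (N * m) (fun u => nu (cyl 0 u) * cnt Sigma m w N u) <=
       SW (N * m) (fun u => INR N * (indR (cnt Sigma m w N u >= t * INR N) * nu (cyl 0 u)) + t * INR N * nu (cyl 0 u))).
    { apply SW_le. intros u _.
      pose proof (mu_nonneg Sigma nu Hnu _ (cyl_borel Sigma 0 u)).
      pose proof (cnt_bounds Sigma m w N u).
      assert (0 <= t) by (unfold t; lra).
      assert (0 <= t * INR N * nu (cyl 0 u)) by (apply Rmult_le_pos; [apply Rmult_le_pos|]; lra).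
      destruct (excluded_middle_informative (cnt Sigma m w N u >= t * INR N)) as [Hc2|Hc2].
      - rewrite indR_true by auto.
        assert (nu (cyl 0 u) * cnt Sigma m w N u <= nu (cyl 0 u) * INR N) by (apply Rmult_le_compat_l; lra).
        lra.
      - rewrite indR_false by auto.
        assert (nu (cyl 0 u) * cnt Sigma m w N u <= nu (cyl 0 u) * (t * INR N)) by (apply Rmult_le_compat_l; lra).
        lra. }
    rewrite SW_plus, !SW_scal, <- EnuS, (SW_meas_one Sigma l Hnodup Hfull nu Hnu), HEnu in Hle.
    unfold c0, t in *. nra. }
  assert (HmuS : mu S < eps).
  { assert (mu S * INR N * c0 ^ 2 <= 1).
    { apply (Rmult_le_reg_r (INR N)); auto. replace (mu S * INR N * c0 ^ 2 * INR N) with (mu S * (INR N * c0) ^ 2) by ring. lra. }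
    assert (1 < eps * c0 ^ 2 * INR N).
    { apply (Rmult_lt_compat_r (INR N)) in HN; auto. rewrite Rinv_l in HN; lra. }
    assert (0 < c0 ^ 2 * INR N) by (apply Rmult_lt_0_compat; auto; apply pow_lt; auto).
    nra. }
  specialize (Htop S HSloc HmuS). lra.
Qed.

Lemma all_eq v : nu (cyl 0 v) = wp v.
Proof.
  destruct (Req_dec (nu (cyl 0 v)) (wp v)) as [|Hne]; auto. exfalso.
  set (m := length v).
  assert (Hle : forall u, length u = m -> nu (cyl 0 u) <= wp u).
  { intros u _. apply Rnot_lt_le. intro H. apply (key u). auto. }
  assert (Hs : SW m (fun u => wp u + (-1) * nu (cyl 0 u)) = 0).
  { rewrite SW_plus, SW_scal, (SW_wp Sigma l p Hpv), (SW_meas_one Sigma l Hnodup Hfull nu Hnu). ring. }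
  pose proof (SW_single_le Sigma l Hnodup Hfull m v (fun u => wp u + (-1) * nu (cyl 0 u)) eq_refl) as H.
  simpl in H. assert (wp v + -1 * nu (cyl 0 v) <= 0).
  { rewrite <- Hs. apply H. intros u Hu. specialize (Hle u Hu). lra. }
  specialize (Hle v eq_refl). lra.
Qed.

Lemma main_meas_eq : meas_eq Sigma nu mu.
Proof.
  intros A HA. apply (uniq_cyl Sigma nu mu Hnu Hmup l Hnodup Hfull); auto.
  intros a u. rewrite Hst, all_eq, Hmucyl. auto.
Qed.

End Main.

Lemma shift_cyl (Sigma : Type) a u :
  (fun x => cylinder Sigma a u (Defs.shift Sigma x)) = cylinder Sigma (a + 1) u.
Proof.
  apply functional_extensionality; intro x. apply propositional_extensionality.
  unfold cylinder, Defs.shift. split; intros H i b Hi; rewrite <- (H i b Hi); f_equal; lia.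
Qed.

Lemma stationary (Sigma : Type) (nu : cset Sigma -> R) :
  shift_invariant Sigma nu -> forall a u, nu (cylinder Sigma a u) = nu (cylinder Sigma 0 u).
Proof.
  intros Hs a u.
  assert (Hn : forall n b, nu (cylinder Sigma (b + Z.of_nat n) u) = nu (cylinder Sigma b u)).
  { induction n; intro b. rewrite Z.add_0_r; auto.
    replace (b + Z.of_nat (S n))%Z with (b + Z.of_nat n + 1)%Z by lia.
    rewrite <- shift_cyl, Hs. apply IHn. apply cyl_borel. }
  destruct (Z_le_gt_dec 0 a).
  - rewrite <- (Hn (Z.to_nat a) 0%Z). f_equal. f_equal. lia.
  - rewrite <- (Hn (Z.to_nat (- a)) a). f_equal. f_equal. lia.
Qed.

Theorem corollary5p4 (Sigma : Type) (l : list Sigma)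
  (Hnodup : NoDup l) (Hfull : forall a : Sigma, In a l) (H2 : (2 <= length l)%nat) :
  (* (1) distinct Bernoulli measures induce distinct topologies *)
  (forall (p q : Sigma -> R) (mu mu' : cset Sigma -> R),
      is_bernoulli Sigma l p mu -> is_bernoulli Sigma l q mu' ->
      ~ meas_eq Sigma mu mu' ->
      ~ same_topology Sigma mu mu') /\
  (* (2) Bernoulli vs any other shift-invariant Borel probability measure *)
  (forall (p : Sigma -> R) (mu nu : cset Sigma -> R),
      is_bernoulli Sigma l p mu ->
      is_prob_measure Sigma nu -> shift_invariant Sigma nu ->
      ~ meas_eq Sigma nu mu ->
      ~ same_topology Sigma nu mu).
Proof.
  destruct l as [|a0 [|a1 l']] eqn:El; simpl in H2; try lia.
  assert (Ha : a0 <> a1).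
  { intro; subst. inversion Hnodup as [|x y Hni Hnd]; subst. apply Hni; simpl; auto. }
  rewrite <- El in *. split.
  - intros p q mu mu' Hmu Hmu' Hne Hst. apply Hne.
    assert (E : meas_eq Sigma mu' mu).
    { apply (main_meas_eq Sigma l Hnodup Hfull a0 a1 Ha p mu mu' Hmu).
      apply Hmu'. intros a u. destruct Hmu' as [_ [_ Hc]]. rewrite !Hc. auto.
      intros U HU HO. apply (Hst U HU). auto. }
    intros A HA. symmetry. apply E; auto.
  - intros p mu nu Hmu Hnu Hs Hne Hst. apply Hne.
    apply (main_meas_eq Sigma l Hnodup Hfull a0 a1 Ha p mu nu Hmu Hnu).
    apply stationary; auto.
    intros U HU HO. apply (Hst U HU). auto.
Qed.
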